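(* Let $C>0$, $\mathbf{w}^t\in\mathbb{R}^d$, let $\theta_1^t\le\dots\le\theta_{K-1}^t$ be real thresholds, $\mathbf{x}^t\in\mathbb{R}^d$ and integers $1\le y_l^t\le y_r^t\le K$; let $I_t=\{1,\dots,y_l^t-1\}\cup\{y_r^t,\dots,K-1\}$. Let $(\mathbf{w}^{t+1},\boldsymbol\theta^{t+1})$ be the PA-I update, i.e. the $(\mathbf{w},\boldsymbol\theta)$-part of the minimizer over $\mathbf{w}\in\mathbb{R}^d$, $\boldsymbol\theta\in\mathbb{R}^{K-1}$, $(\xi_i)_{i\in I_t}$ of $$\tfrac12\Vert\mathbf{w}-\mathbf{w}^t\Vert^2+\tfrac12\Vert\boldsymbol\theta-\boldsymbol\theta^t\Vert^2+C\sum_{i\in I_t}\xi_i$$ subject to $\mathbf{w}\cdot\mathbf{x}^t-\theta_i\ge 1-\xi_i$ for $i=1,\dots,y_l^t-1$, $\mathbf{w}\cdot\mathbf{x}^t-\theta_i\le -1+\xi_i$ for $i=y_r^t,\dots,K-1$, and $\xi_i\ge 0$ for $i\in I_t$. Then $\theta_1^{t+1}\le\theta_2^{t+1}\le\dots\le\theta_{K-1}^{t+1}$.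
   Context: Online ranking into $K$ ordered classes with interval labels $[y_l^t,y_r^t]$: a ranker is $(\mathbf{w},\boldsymbol\theta)$, $\boldsymbol\theta=(\theta_1,\dots,\theta_{K-1})$, predicting $\min\{i:\mathbf{w}\cdot\mathbf{x}-\theta_i<0\}$ with $\theta_K=\infty$. PA-I is the passive-aggressive variant with aggressiveness parameter $C$ that at each trial computes the exact solution of the stated convex program. *)

(* Defs.v *)
From HB Require Import structures.
From mathcomp Require Import all_boot all_order all_algebra.
From mathcomp Require Import reals.
Set Implicit Arguments. Unset Strict Implicit. Unset Printing Implicit Defensive.
Import Order.TTheory GRing.Theory Num.Theory.
Local Open Scope ring_scope.

(* Thresholds theta_1..theta_{K-1} are represented by th : 'I_(K-1) -> R,
   with th i standing for theta_{i+1} (0-based ordinal i). *)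

Definition dotv (R : realType) (d : nat) (u v : 'I_d -> R) : R :=
  \sum_(j < d) u j * v j.

Definition sqdist (R : realType) (n : nat) (u v : 'I_n -> R) : R :=
  \sum_(j < n) (u j - v j) ^+ 2.

(* membership of (0-based) index i in I_t = {1..yl-1} u {yr..K-1}
   (1-based): theta_{i+1} with i+1 < yl (left) or yr <= i+1 (right) *)
Definition in_left (yl : nat) (K : nat) (i : 'I_(K - 1)) : bool := (i.+1 < yl)%N.
Definition in_right (yr : nat) (K : nat) (i : 'I_(K - 1)) : bool := (yr <= i.+1)%N.
Definition in_It (yl yr K : nat) (i : 'I_(K - 1)) : bool :=
  in_left yl i || in_right yr i.

Definition paI_obj (R : realType) (d K : nat) (C : R) (yl yr : nat)
  (wt : 'I_d -> R) (tht : 'I_(K - 1) -> R)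
  (w : 'I_d -> R) (th : 'I_(K - 1) -> R) (xi : 'I_(K - 1) -> R) : R :=
  2^-1 * sqdist w wt + 2^-1 * sqdist th tht
  + C * \sum_(i < K - 1 | in_It yl yr i) xi i.

Definition paI_feasible (R : realType) (d K : nat) (yl yr : nat)
  (x : 'I_d -> R) (w : 'I_d -> R) (th : 'I_(K - 1) -> R)
  (xi : 'I_(K - 1) -> R) : Prop :=
  (forall i : 'I_(K - 1), in_left yl i -> dotv w x - th i >= 1 - xi i) /\
  (forall i : 'I_(K - 1), in_right yr i -> dotv w x - th i <= -1 + xi i) /\
  (forall i : 'I_(K - 1), in_It yl yr i -> 0 <= xi i).

Definition paI_minimizer (R : realType) (d K : nat) (C : R) (yl yr : nat)
  (wt : 'I_d -> R) (tht : 'I_(K - 1) -> R) (x : 'I_d -> R)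
  (w : 'I_d -> R) (th : 'I_(K - 1) -> R) (xi : 'I_(K - 1) -> R) : Prop :=
  paI_feasible yl yr x w th xi /\
  forall (w' : 'I_d -> R) (th' : 'I_(K - 1) -> R) (xi' : 'I_(K - 1) -> R),
    paI_feasible yl yr x w' th' xi' ->
    paI_obj C yl yr wt tht w th xi <= paI_obj C yl yr wt tht w' th' xi'.

(* Main.v *)
Require Import Defs.
From HB Require Import structures.
From mathcomp Require Import all_boot all_order all_algebra.
From mathcomp Require Import reals.
From mathcomp Require Import zify lra.
Import Order.TTheory GRing.Theory Num.Theory.
Local Open Scope ring_scope.

Lemma sum2_diff (R : realType) n (F G : 'I_n -> R) (i j : 'I_n) :
  i != j -> (forall k, k != i -> k != j -> F k = G k) ->
  \sum_k F k - \sum_k G k = (F i - G i) + (F j - G j).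
Proof.
move=> hij hFG; rewrite -sumrB (bigD1 i) //= (bigD1 j) /=; last by rewrite eq_sym.
rewrite big1 ?addr0 // => k /andP [hki hkj]; rewrite hFG ?subrr //.
Qed.

Theorem theorem2 (R : realType) (d K : nat) (C : R)
  (wt : 'I_d -> R) (tht : 'I_(K - 1) -> R) (x : 'I_d -> R) (yl yr : nat)
  (hC : 0 < C)
  (htht : forall i j : 'I_(K - 1), (i <= j)%N -> tht i <= tht j)
  (hyl : (1 <= yl)%N) (hylr : (yl <= yr)%N) (hyr : (yr <= K)%N)
  (w : 'I_d -> R) (th : 'I_(K - 1) -> R) (xi : 'I_(K - 1) -> R)
  (hmin : paI_minimizer C yl yr wt tht x w th xi) :
  forall i j : 'I_(K - 1), (i <= j)%N -> th i <= th j.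
Proof.
move=> i j hij; rewrite leNgt; apply/negP => hlt.
have hneq : i != j by apply/eqP => E; rewrite E ltxx in hlt.
have hji : j != i by rewrite eq_sym.
have hij' : (i < j)%N by rewrite ltn_neqAle hij andbT.
have hab := htht i j hij.
case: hmin => [[hL [hR hP]] hopt].
have LjLi : in_left yl j -> in_left yl i by rewrite /in_left; lia.
have RiRj : in_right yr i -> in_right yr j by rewrite /in_right; lia.
have disj : forall k : 'I_(K-1), in_left yl k -> in_right yr k -> False.
  by move=> k; rewrite /in_left /in_right; lia.
pose th' := fun k => if (k == i) || (k == j) then (th i + th j) / 2 else th k.
pose b := in_left yl j || in_right yr i.
pose xi' := fun k => if b && ((k == i) || (k == j)) then (xi i + xi j) / 2 else xi k.
have Hfeas : paI_feasible yl yr x w th' xi'.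
  rewrite /paI_feasible /th' /xi' /b /=; split; [|split] => k hk.
  - have [E|hki] := eqVneq k i; first subst k.
      rewrite ?eqxx /=; have := hL i hk.
      case hLj: (in_left yl j) => /=.
        have := hL j hLj; lra.
      case hRi: (in_right yr i) => /=; first by case: (disj i).
      lra.
    have [E|hkj] := eqVneq k j; first subst k.
      rewrite /= hk /=; have := hL j hk; have := hL i (LjLi hk); lra.
    rewrite /= ?andbF; exact: hL.
  - have [E|hki] := eqVneq k i; first subst k.
      rewrite ?eqxx /= hk orbT /=; have := hR i hk; have := hR j (RiRj hk); lra.
    have [E|hkj] := eqVneq k j; first subst k.
      rewrite /=; have := hR j hk.
      case hLj: (in_left yl j) => /=; first by case: (disj j).
      case hRi: (in_right yr i) => /=.
        have := hR i hRi; lra.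
      lra.
    rewrite /= ?andbF; exact: hR.
  - case hb: (_ && _); last exact: hP.
    move: hb => /andP [/orP hb _].
    have hIi : in_It yl yr i by rewrite /in_It; case: hb => [/LjLi ->|->]; rewrite ?orbT.
    have hIj : in_It yl yr j by rewrite /in_It; case: hb => [->|/RiRj ->]; rewrite ?orbT.
    have := hP i hIi; have := hP j hIj; lra.
have := hopt w th' xi' Hfeas; rewrite /paI_obj.
have Hsum : \sum_(k < K - 1 | in_It yl yr k) xi' k = \sum_(k < K - 1 | in_It yl yr k) xi k.
  apply/eqP; rewrite -subr_eq0; apply/eqP.
  rewrite [X in X - _]big_mkcond [X in _ - X]big_mkcond /=.
  rewrite (@sum2_diff _ _ _ _ i j hneq); last first.
    by move=> k hki hkj; rewrite /xi' (negbTE hki) (negbTE hkj) andbF.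
  rewrite /xi' !eqxx (negbTE hji) /= ?orbT ?andbT.
  case hb: b => /=; last by rewrite !subrr addr0.
  have hIi : in_It yl yr i by rewrite /in_It; move: hb => /orP [/LjLi ->|->]; rewrite ?orbT.
  have hIj : in_It yl yr j by rewrite /in_It; move: hb => /orP [->|/RiRj ->]; rewrite ?orbT.
  rewrite hIi hIj; lra.
have Hsq : sqdist th' tht - sqdist th tht < 0.
  rewrite /sqdist (@sum2_diff _ _ _ _ i j hneq); last first.
    by move=> k hki hkj; rewrite /th' (negbTE hki) (negbTE hkj).
  rewrite /th' !eqxx (negbTE hji) /= ?orbT.
  have h1 : 0 < th i - th j by lra.
  have h2 : 0 <= (th i - th j) * (tht j - tht i) by apply: mulr_ge0; lra.
  nra.
rewrite Hsum; lra.
Qed.
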